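(* Let $(G,v)$ be a Hamel space over an ordered field $C$ and $G_0\subseteq G$ a $C$-linear subspace. For any $c_1,\dots,c_m\in G\setminus G_0$, \[\#\Big(v\big(G_0+\textstyle\sum_{i=1}^mCc_i\big)\setminus v(G_0)\Big)\le m.\] In particular, there are $n\le m$ and distinct $d_1,\dots,d_n\in v(G_0+\sum_{i=1}^mCc_i)\setminus v(G_0)$ such that $v(G_0+\sum_{i=1}^mCc_i)\subseteq v(G_0)\cup\{d_1,\dots,d_n\}$.
   Context: Let $C$ be an ordered field. A $2$-ordered $C$-vector space is a $C$-vector space $G$ with two total orderings $<_0,<_1$ such that $G$ is an ordered $C$-vector space with respect to each. Put $G_\infty=G\cup\{\infty\}$, with $G<_0\infty$, $G<_1\infty$. A Hamel valuation on $G$ is a map $v:G\to G_\infty$ such that for all $x,y\in G$ and $\lambda\in C^{\times}$: $v(x)=\infty$ iff $x=0$; $v(x+y)\ge_0\min_0(v(x),v(y))$; $v(\lambda x)=v(x)$; if $0<_1x<_1y$ then $v(x)\ge_0v(y)$; $v(v(x))=v(x)$ (with $v(\infty)=\infty$); and $v(x)>_10$. A Hamel space is such a pair $(G,v)$. *)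

(* Defs.v *)
From HB Require Import structures.
From mathcomp Require Import all_boot all_order all_algebra.
Set Implicit Arguments. Unset Strict Implicit. Unset Printing Implicit Defensive.
Import Order.TTheory GRing.Theory Num.Theory.
Local Open Scope ring_scope.

Section HamelDefs.
Variables (C : realFieldType) (G : lmodType C).

Definition total_order (le : rel G) : Prop :=
  [/\ reflexive le, antisymmetric le, transitive le & total le].

Definition ordered_vspace (le : rel G) : Prop :=
  [/\ total_order le,
      (forall x y z : G, le x y -> le (x + z) (y + z)) &
      (forall (a : C) (x : G), 0 < a -> le 0 x -> le 0 (a *: x))].

Definition ltof (le : rel G) (x y : G) : bool := (x != y) && le x y.

(** G_oo = option G, with None = oo, greater than every element of G *)
Definition le_inf (le : rel G) (a b : option G) : bool :=
  match b with
  | None => true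
  | Some y => match a with None => false | Some x => le x y end
  end.

Definition lt_inf (le : rel G) (a b : option G) : bool :=
  (a != b) && le_inf le a b.

Definition min_inf (le : rel G) (a b : option G) : option G :=
  if le_inf le a b then a else b.

Definition v_inf (v : G -> option G) (a : option G) : option G :=
  match a with None => None | Some g => v g end.

Definition hamel_valuation (le0 le1 : rel G) (v : G -> option G) : Prop :=
  (forall x, v x = None <-> x = 0) /\
  [/\ (forall x y, le_inf le0 (min_inf le0 (v x) (v y)) (v (x + y))),
      (forall (lam : C) x, lam != 0 -> v (lam *: x) = v x),
      (forall x y, ltof le1 0 x -> ltof le1 x y -> le_inf le0 (v y) (v x)),
      (forall x, v_inf v (v x) = v x) &
      (forall x, lt_inf le1 (Some 0) (v x))].

Definition subspace (G0 : G -> Prop) : Prop :=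
  [/\ G0 0, (forall x y, G0 x -> G0 y -> G0 (x + y)) &
      (forall (a : C) x, G0 x -> G0 (a *: x))].

Definition in_span_ext (G0 : G -> Prop) (m : nat) (c : 'I_m -> G) (x : G) : Prop :=
  exists g0, exists lam : 'I_m -> C, G0 g0 /\ x = g0 + \sum_(i < m) lam i *: c i.

Definition vimage (v : G -> option G) (S : G -> Prop) (d : option G) : Prop :=
  exists x, S x /\ v x = d.

End HamelDefs.

(* Main.v *)
Require Import Defs.
From HB Require Import structures.
From mathcomp Require Import all_boot all_order all_algebra.
From Stdlib Require Import Classical.
Set Implicit Arguments. Unset Strict Implicit.
Import Order.TTheory GRing.Theory Num.Theory.
Local Open Scope ring_scope.

Lemma leI_refl (C : realFieldType) (G : lmodType C) (le : rel G) :
  total_order le -> forall a, le_inf le a a.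
Proof. by case=> r _ _ _ [x|] //=. Qed.

Lemma leI_antisym (C : realFieldType) (G : lmodType C) (le : rel G) :
  total_order le -> forall a b, le_inf le a b -> le_inf le b a -> a = b.
Proof.
case=> _ an _ _ [x|] [y|] //= h1 h2; congr Some; apply: an; by rewrite h1 h2.
Qed.

Lemma leI_total (C : realFieldType) (G : lmodType C) (le : rel G) :
  total_order le -> forall a b, le_inf le a b \/ le_inf le b a.
Proof.
case=> _ _ _ t [x|] [y|] /=; auto.
by case/orP: (t x y); auto.
Qed.

Lemma min_le (C : realFieldType) (G : lmodType C) (le : rel G) a b :
  le_inf le a b -> min_inf le a b = a.
Proof. by rewrite /min_inf => ->. Qed.

Lemma min_nle (C : realFieldType) (G : lmodType C) (le : rel G) a b :
  ~~ le_inf le a b -> min_inf le a b = b.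
Proof. by rewrite /min_inf => /negbTE ->. Qed.

Lemma ultra_aux (C : realFieldType) (G : lmodType C)
  (le0 le1 : rel G) (v : G -> option G)
  (ht : total_order le0) (hv : hamel_valuation le0 le1 v) u w :
  v u <> v w -> le_inf le0 (v u) (v w) -> v (u + w) = v u \/ v (u + w) = v w.
Proof.
case: hv => _ [hu hs _ _ _] ne le.
have h1 := hu u w; rewrite min_le // in h1.
have h2 := hu (u + w) (- w).
rewrite addrK -scaleN1r hs ?oppr_eq0 ?oner_eq0 // in h2.
case: (boolP (le_inf le0 (v (u + w)) (v w))) => c.
  rewrite min_le // in h2; left; exact: leI_antisym ht _ _ h2 h1.
rewrite min_nle // in h2; exfalso; apply: ne; exact: leI_antisym ht _ _ le h2.
Qed.

Lemma ultra (C : realFieldType) (G : lmodType C)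
  (le0 le1 : rel G) (v : G -> option G)
  (ht : total_order le0) (hv : hamel_valuation le0 le1 v) u w :
  v u <> v w -> v (u + w) = v u \/ v (u + w) = v w.
Proof.
move=> ne; case: (leI_total ht (v u) (v w)) => le.
  exact: ultra_aux ht hv _ _ ne le.
rewrite addrC; have [] := ultra_aux ht hv (nesym ne) le; auto.
Qed.

Definition addline (C : realFieldType) (G : lmodType C) (H : G -> Prop) (c : G) (x : G) :=
  exists h, exists a : C, H h /\ x = h + a *: c.

Lemma addline_sub (C : realFieldType) (G : lmodType C) (H : G -> Prop) c :
  subspace H -> subspace (addline H c).
Proof.
case=> h0 hD hZ; split.
- by exists 0, 0; rewrite scale0r addr0.
- move=> x y [h [a [Hh ->]]] [h' [b [Hh' ->]]]; exists (h + h'), (a + b); split; first exact: hD.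
  by rewrite scalerDl addrACA.
- move=> a x [h [b [Hh ->]]]; exists (a *: h), (a * b); split; first exact: hZ.
  by rewrite scalerDr scalerA.
Qed.

Lemma one_step (C : realFieldType) (G : lmodType C)
  (le0 le1 : rel G) (v : G -> option G)
  (ht : total_order le0) (hv : hamel_valuation le0 le1 v) (H : G -> Prop) c :
  subspace H -> forall x y, addline H c x -> addline H c y ->
  ~ vimage v H (v x) -> ~ vimage v H (v y) -> v x = v y.
Proof.
move=> [h0 hD hZ] x y [h [a [Hh ex]]] [h' [b [Hh' ey]]] nx ny.
have hs : forall (lam : C) z, lam != 0 -> v (lam *: z) = v z by case: hv => _ [].
have [a0|an] := eqVneq a 0.
  by exfalso; apply: nx; exists h; split => //; rewrite ex a0 scale0r addr0.
have [b0|bn] := eqVneq b 0.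
  by exfalso; apply: ny; exists h'; split => //; rewrite ey b0 scale0r addr0.
set x1 := a^-1 *: x; set y1 := b^-1 *: y.
have vx : v x1 = v x by apply: hs; rewrite invr_eq0.
have vy : v y1 = v y by apply: hs; rewrite invr_eq0.
have ex1 : x1 = a^-1 *: h + c by rewrite /x1 ex scalerDr scalerA mulVf // scale1r.
have ey1 : y1 = b^-1 *: h' + c by rewrite /y1 ey scalerDr scalerA mulVf // scale1r.
have Hd : H (x1 - y1).
  rewrite ex1 ey1 opprD addrACA subrr addr0 -scaleN1r scalerA.
  by apply: hD; apply: hZ.
have e : x1 = (x1 - y1) + y1 by rewrite subrK.
have [q|q] := eqVneq (v (x1 - y1)) (v y1).
  by exfalso; apply: ny; exists (x1 - y1); rewrite q vy.
have [r|r] := ultra ht hv (fun E => negP q (introT eqP E)); rewrite -e in r.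
  by exfalso; apply: nx; exists (x1 - y1); rewrite -r vx.
by rewrite -vx -vy.
Qed.

Lemma main_gen (C : realFieldType) (G : lmodType C)
  (le0 le1 : rel G) (v : G -> option G)
  (ht : total_order le0) (hv : hamel_valuation le0 le1 v) (n : nat) :
  forall (H : G -> Prop) (c : 'I_n -> G), subspace H ->
  exists s : seq (option G), (size s <= n)%N /\
     forall d, vimage v (in_span_ext H c) d -> ~ vimage v H d -> d \in s.
Proof.
elim: n => [|n IH] H c hH.
  exists [::]; split => // d [x [[g0 [lam [Hg ->]]] <-]] []; exists g0.
  by rewrite big_ord0 addr0.
have hH' := addline_sub (c ord0) hH.
have [s' [sz cov]] := IH _ (fun i => c (lift ord0 i)) hH'.
pose P := exists x, addline H (c ord0) x /\ ~ vimage v H (v x).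
have [d0 hd0] : exists d0 : option G, forall x, addline H (c ord0) x -> ~ vimage v H (v x) -> v x = d0.
  case: (classic P) => [[x0 [h1 h2]]|nP].
    exists (v x0) => x hx nx; exact: (one_step ht hv hH hx h1 nx h2).
  by exists None => x hx nx; exfalso; apply: nP; exists x.
exists (d0 :: s'); split => //.
move=> d [x [[g0 [lam [Hg ex]]] <-]] nd.
case: (classic (vimage v (addline H (c ord0)) (v x))) => [[y [hy vy]]|ny].
  by rewrite -vy (hd0 y hy) ?vy // mem_head.
rewrite in_cons; apply/orP; right; apply: cov => //.
exists x; split => //; exists (g0 + lam ord0 *: c ord0), (fun i => lam (lift ord0 i)); split.
  by exists g0, (lam ord0).
by rewrite ex big_ord_recl addrA.
Qed.

Lemma dedup_P (T : eqType) (P : T -> Prop) (s : seq T) :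
  exists ds : seq T, [/\ (size ds <= size s)%N, uniq ds,
    (forall d, d \in ds -> P d) & (forall d, d \in s -> P d -> d \in ds)].
Proof.
elim: s => [|a s [ds [sz u hP hin]]].
  by exists [::]; split => //.
case: (classic (P a /\ a \notin ds)) => [[pa na]|np].
  exists (a :: ds); split => /=; first by [].
  - by rewrite na.
  - by move=> d; rewrite in_cons => /orP [/eqP ->|]; auto.
  - by move=> d; rewrite !in_cons => /orP [->|/hin h /h ->] //; rewrite orbT.
exists ds; split => //; first exact: leqW.
move=> d; rewrite in_cons => /orP [/eqP -> pa|]; last exact: hin.
by case: (boolP (a \in ds)) => // na; exfalso; apply: np; split.
Qed.

Theorem proposition4p4 (C : realFieldType) (G : lmodType C)
  (le0 le1 : rel G) (v : G -> option G)
  (hord0 : ordered_vspace le0) (hord1 : ordered_vspace le1)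
  (hv : hamel_valuation le0 le1 v)
  (G0 : G -> Prop) (hG0 : subspace G0)
  (m : nat) (c : 'I_m -> G) (hc : forall i, ~ G0 (c i)) :
  (* #( v(G0 + sum C c_i) \ v(G0) ) <= m *)
  (exists s : seq (option G), (size s <= m)%N /\
     forall d, vimage v (in_span_ext G0 c) d -> ~ vimage v G0 d -> d \in s)
  /\
  (* n <= m distinct d_1..d_n in the difference covering v(G0 + sum C c_i) *)
  (exists ds : seq (option G),
     [/\ (size ds <= m)%N, uniq ds,
         (forall d, d \in ds -> vimage v (in_span_ext G0 c) d /\ ~ vimage v G0 d) &
         (forall d, vimage v (in_span_ext G0 c) d -> vimage v G0 d \/ d \in ds)]).
Proof.
have ht : total_order le0 by case: hord0.
have [s [sz cov]] := main_gen ht hv c hG0.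
split; first by exists s.
have [ds [sz' u hP hin]] := dedup_P
  (fun d => vimage v (in_span_ext G0 c) d /\ ~ vimage v G0 d) s.
exists ds; split => //; first exact: leq_trans sz' sz.
move=> d hd; case: (classic (vimage v G0 d)) => h; [by left|right].
by apply: hin; [apply: cov|split].
Qed.
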